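(* Let $q \geq 1$ and let $k$ be a positive integer with $k < n$. Let $\boldsymbol{B} = [\boldsymbol{B}[1] \ \cdots \ \boldsymbol{B}[n]] \in \mathbb{R}^{D \times N}$ be a dictionary with unit-norm columns, blocks $\boldsymbol{B}[i] \in \mathbb{R}^{D \times m_i}$, and pairwise disjoint block subspaces $\mathcal{S}_i = \operatorname{span}(\boldsymbol{B}[i])$. Assume that every signal $\boldsymbol{y} \in \mathbb{R}^D$ that admits a $k$-block-sparse representation admits a unique one. For an index set $\Lambda \subseteq \{1,\dots,n\}$ and $\boldsymbol{x} \in \bigoplus_{i \in \Lambda} \mathcal{S}_i$ let $$V_\Lambda(\boldsymbol{x}) = \min\Big\{ \sum_{i \in \Lambda} \|\boldsymbol{c}[i]\|_q \;:\; \boldsymbol{x} = \sum_{i \in \Lambda} \boldsymbol{B}[i]\boldsymbol{c}[i] \Big\}.$$ Then the following are equivalent: (i) for every set $\Lambda_k \subseteq \{1,\dots,n\}$ with $|\Lambda_k| = k$ and every $\boldsymbol{y} \in \bigoplus_{i \in \Lambda_k} \mathcal{S}_i$, every optimal solution $\boldsymbol{c}^*$ of $P_{\ell_q/\ell_1}(\boldsymbol{y})$ satisfies $\boldsymbol{c}^*[i] = \boldsymbol{0}$ for all $i \notin \Lambda_k$ (i.e. the solution of $P_{\ell_q/\ell_1}$ coincides with the $k$-block-sparse solution of $P_{\ell_q/\ell_0}$); (ii) for every $\Lambda_k \subseteq \{1,\dots,n\}$ with $|\Lambda_k| = k$, writing $\widehat{\Lambda}_k = \{1,\dots,n\} \setminus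 \Lambda_k$, and every nonzero $\boldsymbol{x} \in \big(\bigoplus_{i \in \Lambda_k} \mathcal{S}_i\big) \cap \big(\bigoplus_{i \in \widehat{\Lambda}_k} \mathcal{S}_i\big)$, one has $V_{\Lambda_k}(\boldsymbol{x}) < V_{\widehat{\Lambda}_k}(\boldsymbol{x})$.
   Context: The dictionary $\boldsymbol{B} \in \mathbb{R}^{D\times N}$ has columns of unit Euclidean norm and is partitioned into $n$ blocks $\boldsymbol{B}[i] \in \mathbb{R}^{D \times m_i}$, $\sum_i m_i = N$; blocks may have linearly dependent columns. $\mathcal{S}_i$ is the column span of $\boldsymbol{B}[i]$; the subspaces are disjoint, meaning $\mathcal{S}_i \cap \mathcal{S}_j = \{0\}$ for $i \neq j$. A vector $\boldsymbol{c} \in \mathbb{R}^N$ is written $\boldsymbol{c} = (\boldsymbol{c}[1]; \dots; \boldsymbol{c}[n])$ with $\boldsymbol{c}[i] \in \mathbb{R}^{m_i}$, so $\boldsymbol{B}\boldsymbol{c} = \sum_i \boldsymbol{B}[i]\boldsymbol{c}[i]$. A $k$-block-sparse representation of $\boldsymbol{y}$ is an expression $\boldsymbol{y} = \sum_{i \in \Lambda} \boldsymbol{s}_i$ with $\Lambda \subseteq \{1,\dots,n\}$, $|\Lambda| \le k$, $\boldsymbol{s}_i \in \mathcal{S}_i \setminus \{0\}$; it is unique if any two such expressions have the same index set $\Lambda$ and the same vectors $\boldsymbol{s}_i$. $P_{\ell_q/\ell_1}(\boldsymbol{y})$ is the convex program $\min_{\boldsymbol{c}} \sum_{i=1}^n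 \|\boldsymbol{c}[i]\|_q$ subject to $\boldsymbol{y} = \boldsymbol{B}\boldsymbol{c}$; $P_{\ell_q/\ell_0}(\boldsymbol{y})$ is $\min_{\boldsymbol{c}} \#\{i : \|\boldsymbol{c}[i]\|_q \neq 0\}$ subject to $\boldsymbol{y} = \boldsymbol{B}\boldsymbol{c}$. $\bigoplus$ denotes the (direct) sum of subspaces. *)

(* Defs.v *)
From HB Require Import structures.
From mathcomp Require Import all_boot all_order all_algebra.
From mathcomp Require Import all_classical all_reals all_analysis.
Set Implicit Arguments. Unset Strict Implicit. Unset Printing Implicit Defensive.
Import Order.TTheory GRing.Theory Num.Theory.
Local Open Scope classical_set_scope.
Local Open Scope ring_scope.

Section BlockSparse.
Variables (R : realType) (D n : nat) (m : 'I_n -> nat).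
Variable (B : forall i : 'I_n, 'M[R]_(D, m i)).

Definition coefs := forall i : 'I_n, 'cV[R]_(m i).

Definition lqnorm (q : R) (k : nat) (v : 'cV[R]_k) : R :=
  powR (\sum_(j < k) powR `|v j 0| q) q^-1.

Definition blockspan (i : 'I_n) : set 'cV[R]_D :=
  [set x | exists v : 'cV[R]_(m i), x = B i *m v].

Definition synth (c : coefs) : 'cV[R]_D := \sum_i B i *m c i.

Definition dsum (L : {set 'I_n}) : set 'cV[R]_D :=
  [set x | exists c : coefs, x = \sum_(i in L) B i *m c i].

Definition unit_norm_cols : Prop :=
  forall (i : 'I_n) (j : 'I_(m i)), \sum_(r < D) (B i r j) ^+ 2 = 1.

Definition disjoint_blocks : Prop :=
  forall i j : 'I_n, i != j -> forall x, blockspan i x -> blockspan j x -> x = 0.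

Definition kbs_rep (k : nat) (y : 'cV[R]_D) (L : {set 'I_n})
    (s : 'I_n -> 'cV[R]_D) : Prop :=
  [/\ (#|L| <= k)%N,
      (forall i, i \in L -> blockspan i (s i) /\ s i != 0)
    & y = \sum_(i in L) s i].

Definition unique_kbs (k : nat) : Prop :=
  forall y L s L' s', kbs_rep k y L s -> kbs_rep k y L' s' ->
    L = L' /\ (forall i, i \in L -> s i = s' i).

Definition l1_obj (q : R) (c : coefs) : R := \sum_i lqnorm q (c i).

Definition Pl1_opt (q : R) (y : 'cV[R]_D) (c : coefs) : Prop :=
  y = synth c /\ forall c' : coefs, y = synth c' -> l1_obj q c <= l1_obj q c'.

(* V_L(x) = min { sum_{i in L} ||c[i]||_q : x = sum_{i in L} B[i] c[i] },
   written as an infimum (the minimum is attained) *)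
Definition Vfun (q : R) (L : {set 'I_n}) (x : 'cV[R]_D) : R :=
  inf [set r : R | exists c : coefs,
         x = \sum_(i in L) B i *m c i /\ r = \sum_(i in L) lqnorm q (c i)].

End BlockSparse.

(* Main.v *)
Require Import Defs.
From HB Require Import structures.
From mathcomp Require Import all_boot all_order all_algebra.
From mathcomp Require Import all_classical all_reals all_analysis.
From mathcomp Require Import ring lra.
Import Order.TTheory GRing.Theory Num.Theory.
Local Open Scope classical_set_scope.
Local Open Scope ring_scope.


Section LQ.
Variables (R : realType) (q : R).
Hypothesis q1 : 1 <= q.

Let q0 : 0 < q. Proof. exact: (lt_le_trans ltr01 q1). Qed.
Let qn0 : q != 0. Proof. exact: lt0r_neq0. Qed.

Lemma powRK a : 0 <= a -> powR (powR a q) q^-1 = a.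
Proof. by move=> a0; rewrite -powRrM mulfV ?powRr1. Qed.

Lemma powRKV a : 0 <= a -> powR (powR a q^-1) q = a.
Proof. by move=> a0; rewrite -powRrM mulVf ?powRr1. Qed.

Lemma lq_ge0 {k} (v : 'cV[R]_k) : 0 <= lqnorm q v.
Proof. exact: powR_ge0. Qed.

Lemma lq_pow {k} (v : 'cV[R]_k) : powR (lqnorm q v) q = \sum_j powR `|v j 0| q.
Proof. by rewrite powRKV // sumr_ge0 // => j _; exact: powR_ge0. Qed.

Lemma lq0 k : lqnorm q (0 : 'cV[R]_k) = 0.
Proof.
rewrite /lqnorm big1 ?powR0 ?invr_eq0 // => j _.
by rewrite mxE normr0 powR0.
Qed.

Lemma lq_eq0 {k} (v : 'cV[R]_k) : lqnorm q v = 0 -> v = 0.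
Proof.
move=> /powR_eq0_eq0 /eqP; rewrite psumr_eq0; last by move=> j _; exact: powR_ge0.
move=> /allP H; apply/matrixP => i j; rewrite ord1 mxE.
have /H : i \in index_enum 'I_k by rewrite mem_index_enum.
by rewrite implyTb => /eqP /powR_eq0_eq0 /normr0_eq0.
Qed.

Lemma lq_coord {k} (v : 'cV[R]_k) j : `|v j 0| <= lqnorm q v.
Proof.
rewrite -[X in X <= _](@powRK _ (normr_ge0 (v j 0))) /lqnorm.
have H : powR `|v j 0| q <= \sum_j powR `|v j 0| q.
  by rewrite [leRHS](bigD1 j) //= lerDl sumr_ge0 // => *; exact: powR_ge0.
apply: (ge0_ler_powR _ _ _ H); [by rewrite invr_ge0 ltW|
  by rewrite nnegrE powR_ge0|
  by rewrite nnegrE sumr_ge0 // => *; exact: powR_ge0].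
Qed.

Lemma cvx (t x y : R) : 0 <= t <= 1 -> 0 <= x -> 0 <= y ->
  powR (t * x + (1 - t) * y) q <= t * powR x q + (1 - t) * powR y q.
Proof.
move=> /andP[t0 t1] x0 y0.
have ht : Itv.spec (@Itv.num_sem R) (Itv.Real `[0%Z, 1%Z]) t.
  rewrite /= /Itv.num_sem /=. apply/andP; split; first exact: num_real.
  by rewrite in_itv /= t0 t1.
pose tt : {i01 R} := Itv.mk ht.
have := @convex_powR R q q1 tt x y.
rewrite !inE /= !in_itv /= x0 y0 => /(_ isT isT).
by rewrite !convRE.
Qed.

Lemma sum_normalized {k} (u : 'cV[R]_k) : 0 < lqnorm q u ->
  \sum_j powR (`|u j 0| / lqnorm q u) q = 1.
Proof.
move=> A0.
under eq_bigr do rewrite powRM ?invr_ge0 ?lq_ge0 //.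
rewrite -mulr_suml -lq_pow -powRM ?invr_ge0 ?lq_ge0 // mulfV ?lt0r_neq0 //.
by rewrite powR1.
Qed.

Lemma mink_core k (A B : R) (a b c : 'I_k -> R) : 0 < A -> 0 < B ->
  (forall j, 0 <= a j) -> (forall j, 0 <= b j) ->
  (forall j, 0 <= c j <= a j + b j) ->
  \sum_j powR (a j / A) q = 1 -> \sum_j powR (b j / B) q = 1 ->
  \sum_j powR (c j) q <= powR (A + B) q.
Proof.
move=> A0 B0 a0 b0 cab sa sb.
have T0 : 0 < A + B by exact: addr_gt0.
have t01 : 0 <= A / (A + B) <= 1.
  apply/andP; split; first exact: divr_ge0 (ltW A0) (ltW T0).
  by rewrite ler_pdivrMr // mul1r lerDl ltW.
have t1 : 1 - A / (A + B) = B / (A + B).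
  by field; rewrite lt0r_neq0.
have pt j : powR (c j) q <= powR (A + B) q *
    (A / (A + B) * powR (a j / A) q + (1 - A / (A + B)) * powR (b j / B) q).
  have e : a j + b j =
      (A + B) * (A / (A + B) * (a j / A) + (1 - A / (A + B)) * (b j / B)).
    by rewrite t1; field; rewrite !lt0r_neq0.
  have ge : 0 <= A / (A + B) * (a j / A) + (1 - A / (A + B)) * (b j / B).
    rewrite t1 addr_ge0 // mulr_ge0 // ?divr_ge0 // ltW //.
  apply: (@le_trans _ _ (powR (a j + b j) q)).
    have /andP[c0 cl] := cab j.
    by apply: ge0_ler_powR; rewrite ?nnegrE; [exact: ltW|exact: c0|exact: addr_ge0|exact: cl].
  rewrite e powRM; [|exact: ltW|exact: ge].
  rewrite ler_pM2l ?powR_gt0 //.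
  by apply: cvx; rewrite // divr_ge0 // ltW.
apply: (le_trans (ler_sum _ (fun j _ => pt j))).
rewrite -mulr_sumr big_split /= -!mulr_sumr sa sb.
by rewrite !mulr1 addrC subrK mulr1.
Qed.

Lemma lq_triangle {k} (u v : 'cV[R]_k) :
  lqnorm q (u + v) <= lqnorm q u + lqnorm q v.
Proof.
have [A0|Apos] : lqnorm q u = 0 \/ 0 < lqnorm q u.
  by have := lq_ge0 u; rewrite le_eqVlt => /predU1P[<-|]; [left|right].
  by rewrite (lq_eq0 _ A0) add0r lq0 add0r.
have [B0|Bpos] : lqnorm q v = 0 \/ 0 < lqnorm q v.
  by have := lq_ge0 v; rewrite le_eqVlt => /predU1P[<-|]; [left|right].
  by rewrite (lq_eq0 _ B0) addr0 lq0 addr0.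
have S := @mink_core k _ _ (fun j => `|u j 0|) (fun j => `|v j 0|)
  (fun j => `|(u + v) j 0|) Apos Bpos (fun j => normr_ge0 _) (fun j => normr_ge0 _).
have hc : forall j, 0 <= `|(u + v) j 0| <= `|u j 0| + `|v j 0|.
  by move=> j; rewrite normr_ge0 /= mxE ler_normD.
have {}S := S hc
  (sum_normalized _ Apos) (sum_normalized _ Bpos).
rewrite /lqnorm -[leRHS](@powRK (lqnorm q u + lqnorm q v)) ?addr_ge0 ?lq_ge0 //.
apply: ge0_ler_powR; [by rewrite invr_ge0 ltW|
  by rewrite nnegrE sumr_ge0 // => *; exact: powR_ge0|
  by rewrite nnegrE powR_ge0|first [exact: S|exact: S1]].
Qed.

Lemma powR_le_self t : 0 <= t <= 1 -> powR t q <= t.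
Proof.
move=> /andP[t0 t1]; have [->|tp] := eqVneq t 0; first by rewrite powR0.
by apply: ge1r_powR => //; rewrite lt0r tp t0.
Qed.

Lemma lq_le_sum {k} (v : 'cV[R]_k) : lqnorm q v <= \sum_j `|v j 0|.
Proof.
have S0 : 0 <= \sum_j `|v j 0| by rewrite sumr_ge0.
have [S0'|Spos] : \sum_j `|v j 0| = 0 \/ 0 < \sum_j `|v j 0|.
  by move: S0; rewrite le_eqVlt => /predU1P[<-|]; [left|right].
  have -> : v = 0.
    apply/matrixP => i j; rewrite ord1 mxE; apply/normr0_eq0.
    by move/eqP: S0'; rewrite psumr_eq0 // => /allP /(_ i (mem_index_enum _)) /eqP.
  by rewrite lq0 big1 // => j _; rewrite mxE normr0.
set S := \sum_j `|v j 0| in S0 Spos *.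
have pt j : powR `|v j 0| q <= powR S q * (`|v j 0| / S).
  have -> : `|v j 0| = S * (`|v j 0| / S) by field; rewrite lt0r_neq0.
  rewrite powRM; [|exact: ltW|by rewrite divr_ge0 // ltW].
  rewrite ler_pM2l ?powR_gt0 //.
  rewrite mulrAC mulfV ?lt0r_neq0 // mul1r.
  apply: powR_le_self; rewrite divr_ge0 //= ler_pdivrMr // mul1r.
  by rewrite /S (bigD1 j) //= lerDl sumr_ge0.
have S1 : \sum_j powR `|v j 0| q <= powR S q.
  apply: (le_trans (ler_sum _ (fun j _ => pt j))).
  by rewrite -mulr_sumr -mulr_suml mulfV ?lt0r_neq0 // mulr1.
have S2 := S1.
rewrite /lqnorm -[leRHS](@powRK S S0).
apply: ge0_ler_powR; [by rewrite invr_ge0 ltW|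
  by rewrite nnegrE sumr_ge0 // => *; exact: powR_ge0|
  by rewrite nnegrE powR_ge0|first [exact: S|exact: S1]].
Qed.

Lemma lqN {k} (v : 'cV[R]_k) : lqnorm q (- v) = lqnorm q v.
Proof. by rewrite /lqnorm; congr powR; apply: eq_bigr => j _; rewrite mxE normrN. Qed.

End LQ.

Module Ex.
Import numFieldNormedType.Exports.
Import ArrowAsProduct.


Lemma cont_from_bound (T : topologicalType) (R : realType) (f h : T -> R) x :
  {for x, continuous h} -> h x = 0 -> (forall y, `|f x - f y| <= h y) ->
  {for x, continuous f}.
Proof.
move=> hc h0 hb; apply/cvgrPdist_lt => e e0.
move/cvgrPdist_lt: hc => /(_ e e0); apply: filterS => y.
rewrite h0 sub0r normrN => hy.
by apply: le_lt_trans (hb y) (le_lt_trans (ler_norm _) hy).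
Qed.

Lemma absdiff_le (R : realType) (a b c : R) :
  a <= b + c -> b <= a + c -> `|a - b| <= c.
Proof. by move=> h1 h2; rewrite ler_norml; apply/andP; split; lra. Qed.

Section Cont.
Variables (R : realType) (q : R).
Hypothesis q1 : 1 <= q.

Lemma lqT_cont k : continuous (fun v : 'rV[R]_k => lqnorm q v^T).
Proof.
move=> w.
apply: (@cont_from_bound _ _ _ (fun u : 'rV[R]_k => \sum_j `|w ord0 j - u ord0 j|)).
- suff hc : continuous (fun u : 'rV[R]_k => \sum_j `|w ord0 j - u ord0 j|) by exact: hc.
  apply: continuous_big; first exact: add_continuous.
  move=> j _ u.
  have cf : continuous (fun u : 'rV[R]_k => w ord0 j - u ord0 j).
    move=> z; apply: continuousB; [exact: cst_continuous|exact: coord_continuous].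
  have := continuous_comp (cf u) (@norm_continuous _ R^o _). by apply.
- by rewrite big1 // => j _; rewrite subrr normr0.
- move=> u.
  have h1 : lqnorm q w^T <= lqnorm q u^T + lqnorm q (w - u)^T.
    have e : w^T = u^T + (w - u)^T by rewrite linearB /= addrC subrK.
    by rewrite {1}e; exact: lq_triangle.
  have h2 : lqnorm q u^T <= lqnorm q w^T + lqnorm q (w - u)^T.
    have e : u^T = w^T + - (w - u)^T by rewrite linearB /= opprB addrC subrK.
    by rewrite {1}e -(@lqN R q _ (w - u)^T); exact: lq_triangle.
  apply: (le_trans (y := lqnorm q (w - u)^T)).
    exact: absdiff_le h1 h2.
  by apply: (le_trans (@lq_le_sum R q q1 _ _)); apply: ler_sum => j _; rewrite !mxE.
Qed.

End Cont.

Section Exist.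
Variables (R : realType) (q : R).
Hypothesis q1 : 1 <= q.
Variables (D n : nat) (m : 'I_n -> nat) (B : forall i : 'I_n, 'M[R]_(D, m i)).

Definition KK := fun i : 'I_n => Topological.clone ('rV[R]_(m i)) _.
Definition PP := forall i, KK i.
Definition trc (d : PP) : coefs R m := fun i => (d i)^T.

Lemma coordP_cont i j : continuous (fun d : PP => d i ord0 j).
Proof.
move=> d.
exact: (continuous_comp (@proj_continuous _ KK i d) (@coord_continuous _ _ _ ord0 j _)).
Qed.

Lemma obj_cont : continuous (fun d : PP => l1_obj q (trc d)).
Proof.
rewrite /l1_obj /trc.
apply: continuous_big; first exact: add_continuous.
move=> i _ d.
have := continuous_comp (@proj_continuous _ KK i d) (@lqT_cont R q q1 (m i) (d i)).
by apply.
Qed.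

Lemma synth_entry (d : PP) (x : 'cV[R]_D) r :
  (synth B (trc d) - x) r 0 = \sum_i \sum_j B i r j * d i ord0 j - x r 0.
Proof.
rewrite !mxE /synth summxE; congr (_ - _); apply: eq_bigr => i _.
by rewrite mxE; apply: eq_bigr => j _; rewrite mxE.
Qed.

Lemma syn_cont (x : 'cV[R]_D) :
  continuous (fun d : PP => \sum_r `|(synth B (trc d) - x) r 0|).
Proof.
apply: continuous_big; first exact: add_continuous.
move=> r _ d.
have cf : continuous (fun d : PP => (synth B (trc d) - x) r 0).
  move=> e; under [X in continuous_at _ X]funext do rewrite synth_entry.
  apply: continuousB; last exact: cst_continuous.
  have : continuous (fun d : PP => \sum_i \sum_j B i r j * d i ord0 j).
    apply: continuous_big; first exact: add_continuous.
    move=> i _; apply: continuous_big; first exact: add_continuous.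
    move=> j _ z; apply: continuousM; first exact: cst_continuous.
    exact: coordP_cont.
  by apply.
exact: (continuous_comp (cf d) (@norm_continuous _ R^o _)).
Qed.

Lemma sumabs_eq0 k (v : 'cV[R]_k) : \sum_r `|v r 0| = 0 -> v = 0.
Proof.
move/eqP; rewrite psumr_eq0 // => /allP H; apply/matrixP => i j.
rewrite ord1 mxE; apply/normr0_eq0.
by have /H /eqP := mem_index_enum i.
Qed.

Lemma trcK (c : coefs R m) : trc (fun i => (c i)^T) = c.
Proof. by apply: functional_extensionality_dep => i; rewrite /trc trmxK. Qed.

Lemma exists_opt (x : 'cV[R]_D) :
  (exists c : coefs R m, x = synth B c) -> exists c, Pl1_opt B q x c.
Proof.
case=> c0 hc0.
pose M := l1_obj q c0.
pose d0 : PP := fun i => (c0 i)^T.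
pose A := [set d : PP | \sum_r `|(synth B (trc d) - x) r 0| = 0] `&`
          [set d : PP | l1_obj q (trc d) <= M].
have memA (d : PP) : synth B (trc d) = x -> l1_obj q (trc d) <= M -> A d.
  move=> h1 h2; split => //=.
  by rewrite h1 subrr big1 // => r _; rewrite mxE normr0.
have A0 : A !=set0 by exists d0; apply: memA; rewrite /d0 trcK.
have Acl : closed A.
  apply: closedI.
    by have := (continuous_closedP _).1 (syn_cont x) _ (@closed_eq _ 0); apply.
  by have := (continuous_closedP _).1 obj_cont _ (@closed_le _ M); apply.
pose Bx := [set d : PP | forall i, (fun i => [set v : KK i |
              forall j, `[-M, M]%classic (v ord0 j)]) i (d i)].
have Bxc : compact Bx.
  apply: (@tychonoff _ KK (fun i => [set v : KK i | forall j, `[-M, M]%classic (v ord0 j)])) => i.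
  have := @rV_compact R^o (m i) (fun j => `[-M, M]%classic).
  by apply => j; exact: segment_compact.
have AB : A `<=` Bx.
  move=> d [_ hM] i j /=; rewrite in_itv /= -ler_norml.
  apply: (le_trans _ hM); rewrite /l1_obj.
  apply: (le_trans (y := lqnorm q (trc d i))).
    by have := @lq_coord R q q1 _ (trc d i) j; rewrite /trc mxE.
  rewrite [leRHS](bigD1 i) //= lerDl sumr_ge0 // => *; exact: lq_ge0.
have cA : compact A by exact: subclosed_compact Acl Bxc AB.
have cwA : {within A, continuous (fun d : PP => l1_obj q (trc d))}.
  by apply: continuous_subspaceT; exact: obj_cont.
have [dm dmA dmmin] := compact_EVT_min A0 cA cwA.
move: (dmA); rewrite inE => -[/= /sumabs_eq0 /eqP] hs hdM.
exists (trc dm); split; first by move: hs; rewrite subr_eq0 => /eqP ->.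
move=> c' hc'.
have [le|lt] := leP (l1_obj q c') M.
  have : A (fun i => (c' i)^T) by apply: memA; rewrite trcK.
  by rewrite -inE => /dmmin; rewrite trcK.
exact: le_trans hdM (ltW lt).
Qed.

End Exist.

End Ex.
Import Ex.


Section Main.
Variables (R : realType) (q : R).
Hypothesis q1 : 1 <= q.
Variables (D n : nat) (m : 'I_n -> nat).

Definition restr (S : {set 'I_n}) (c : coefs R m) : coefs R m :=
  fun i => if i \in S then c i else 0.

Lemma l1_restr S c : l1_obj q (restr S c) = \sum_(i in S) lqnorm q (c i).
Proof.
rewrite /l1_obj [RHS]big_mkcond; apply: eq_bigr => i _; rewrite /restr.
by case: (i \in S) => //; rewrite lq0.
Qed.

Lemma synth_restr (B : forall i : 'I_n, 'M[R]_(D, m i)) S c :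
  synth B (restr S c) = \sum_(i in S) B i *m c i.
Proof.
rewrite /synth [RHS]big_mkcond; apply: eq_bigr => i _; rewrite /restr.
by case: (i \in S) => //; rewrite mulmx0.
Qed.

Lemma sum_split (V : zmodType) (S : {set 'I_n}) (F : 'I_n -> V) :
  \sum_i F i = \sum_(i in S) F i + \sum_(i in ~: S) F i.
Proof.
rewrite (bigID (mem S)) /=; congr (_ + _).
by apply: eq_bigl => i; rewrite !inE.
Qed.

Lemma Vset_lb (B : forall i : 'I_n, 'M[R]_(D, m i)) (L : {set 'I_n}) (x : 'cV[R]_D) :
  has_lbound [set r : R | exists c : coefs R m,
         x = \sum_(i in L) B i *m c i /\ r = \sum_(i in L) lqnorm q (c i)].
Proof.
exists 0 => r [c [_ ->]]; rewrite sumr_ge0 // => i _; exact: lq_ge0.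
Qed.

Lemma V_le (B : forall i : 'I_n, 'M[R]_(D, m i)) (L : {set 'I_n}) (x : 'cV[R]_D) (c : coefs R m) :
  x = \sum_(i in L) B i *m c i -> Vfun B q L x <= \sum_(i in L) lqnorm q (c i).
Proof.
move=> hx; apply: (ge_inf (Vset_lb B L x)); by exists c.
Qed.

Lemma V_lt (B : forall i : 'I_n, 'M[R]_(D, m i)) (L : {set 'I_n}) (x : 'cV[R]_D) s :
  dsum B L x -> Vfun B q L x < s ->
  exists c : coefs R m, x = \sum_(i in L) B i *m c i /\
                        \sum_(i in L) lqnorm q (c i) < s.
Proof.
move=> [a ha] hs.
have hinf : has_inf [set r : R | exists c : coefs R m,
         x = \sum_(i in L) B i *m c i /\ r = \sum_(i in L) lqnorm q (c i)].
  split; last exact: Vset_lb.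
  by exists (\sum_(i in L) lqnorm q (a i)); exists a.
have hs0 : 0 < s - Vfun B q L x by rewrite subr_gt0.
have [e [c [hc ->]] he] := inf_adherent hs0 hinf.
exists c; split => //.
by move: he; rewrite /Vfun addrC subrK.
Qed.

Lemma V_ge (B : forall i : 'I_n, 'M[R]_(D, m i)) (L : {set 'I_n}) (x : 'cV[R]_D) b :
  dsum B L x ->
  (forall c : coefs R m, x = \sum_(i in L) B i *m c i ->
     b <= \sum_(i in L) lqnorm q (c i)) ->
  b <= Vfun B q L x.
Proof.
move=> [a ha] hb; apply: lb_le_inf.
  by exists (\sum_(i in L) lqnorm q (a i)); exists a.
by move=> r [c [hc ->]]; exact: hb.
Qed.

End Main.
Arguments restr {R n m} S c.
Arguments l1_restr {R q} q1 {n m} S c.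
Arguments synth_restr {R D n m} B S c.
Arguments sum_split {n} V S F.
Arguments V_le {R q D n m} B L x c.
Arguments V_lt {R q D n m} B L x s.
Arguments V_ge {R q D n m} B L x b.

Theorem theorem1 (R : realType) (q : R) (D n k : nat) (m : 'I_n -> nat)
    (B : forall i : 'I_n, 'M[R]_(D, m i)) :
  1 <= q -> (0 < k)%N -> (k < n)%N ->
  unit_norm_cols B -> disjoint_blocks B -> unique_kbs B k ->
  ((forall L : {set 'I_n}, #|L| = k ->
      forall y : 'cV[R]_D, dsum B L y ->
      forall c : (forall i : 'I_n, 'cV[R]_(m i)), Pl1_opt B q y c ->
      forall i : 'I_n, i \notin L -> c i = 0)
   <->
   (forall L : {set 'I_n}, #|L| = k ->
      forall x : 'cV[R]_D, x != 0 -> dsum B L x -> dsum B (~: L) x ->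
      Vfun B q L x < Vfun B q (~: L) x)).
Proof.
move=> q1 _ _ _ _ _; split.
- move=> H1 L hL x xne [a ha] [b hb].
  have [cs [hcs hopt]] : exists c, Pl1_opt B q x c.
    apply: (@exists_opt R q q1 D n m B); exists (restr L a); by rewrite synth_restr.
  have Hcs := H1 L hL x (ex_intro _ a ha) cs (conj hcs hopt).
  pose B' : forall i : 'I_n, 'M[R]_(D, m i) :=
    fun i => if i \in ~: L then B i else 0.
  have synthB' (c : coefs R m) : synth B' c = \sum_(i in ~: L) B i *m c i.
    rewrite /synth [RHS]big_mkcond; apply: eq_bigr => i _; rewrite /B'.
    by case: (i \in ~: L) => //; rewrite mul0mx.
  have [c2 [hc2 hopt2]] : exists c, Pl1_opt B' q x c.
    apply: (@exists_opt R q q1 D n m B'); exists b; by rewrite synthB'.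
  have Vge : \sum_(i in ~: L) lqnorm q (c2 i) <= Vfun B q (~: L) x.
    apply: V_ge; first by exists b.
    move=> c hc.
    apply: (le_trans (y := l1_obj q c2)).
      rewrite /l1_obj (sum_split _ (~: L)) lerDl sumr_ge0 // => *; exact: lq_ge0.
    rewrite -(l1_restr q1 (~: L) c); apply: hopt2; rewrite synthB' {1}hc.
    by apply: eq_bigr => i hi; rewrite /restr hi.
  have Vle : Vfun B q L x <= l1_obj q cs.
    have hxL : x = \sum_(i in L) B i *m cs i.
      rewrite {1}hcs /synth (sum_split _ L) [X in _ + X]big1 ?addr0 // => i.
      by rewrite inE => /Hcs ->; rewrite mulmx0.
    apply: (le_trans (V_le B L x cs hxL)).
    rewrite /l1_obj (sum_split _ L) [X in _ + X]big1 ?addr0 // => i; rewrite inE => /Hcs ->.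
    by rewrite lq0.
  rewrite ltNge; apply/negP => hle.
  pose e := restr (~: L) c2.
  have he : x = synth B e by rewrite synth_restr -synthB'.
  have hopte : Pl1_opt B q x e.
    split; first exact: he.
    move=> c' hc'.
    rewrite (l1_restr q1); apply: (le_trans Vge); apply: (le_trans hle).
    by apply: (le_trans Vle); exact: hopt hc'.
  have He := H1 L hL x (ex_intro _ a ha) e hopte.
  have e0 : forall i, e i = 0.
    move=> i; case: (boolP (i \in L)) => hi; last exact: He.
    by rewrite /e /restr inE hi.
  move/eqP: xne; apply; rewrite he /synth big1 // => i _; by rewrite e0 mulmx0.
- move=> H2 L hL y [a ha] c [hy hopt] i0 hi0.
  have [//|hne] := eqVneq (c i0) 0.
  exfalso.
  have Ni0 : 0 < lqnorm q (c i0).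
    rewrite lt0r lq_ge0 andbT; apply/negP => /eqP /(@lq_eq0 R q _ _) h.
    by move/eqP: hne.
  have spos : 0 < \sum_(i in ~: L) lqnorm q (c i).
    apply: (lt_le_trans Ni0).
    rewrite (bigD1 i0) /=; last by rewrite inE hi0.
    by rewrite lerDl sumr_ge0 // => *; exact: lq_ge0.
  pose x := \sum_(i in ~: L) B i *m c i.
  have hyx : y = \sum_(i in L) B i *m c i + x by rewrite {1}hy /synth (sum_split _ L).
  have hxL : dsum B L x.
    exists (fun i => a i - c i).
    have -> : x = y - \sum_(i in L) B i *m c i.
      by rewrite hyx addrAC subrr add0r.
    rewrite {1}ha -sumrB; apply: eq_bigr => i _; by rewrite mulmxBr.
  have [c' [hc' hlt]] : exists c' : coefs R m, x = \sum_(i in L) B i *m c' i /\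
      \sum_(i in L) lqnorm q (c' i) < \sum_(i in ~: L) lqnorm q (c i).
    have [x0|xne] := eqVneq x 0.
      exists (fun i => 0); split.
        by rewrite x0 big1 // => i _; rewrite mulmx0.
      by rewrite big1 // => i _; rewrite (@lq0 R q q1).
    apply: V_lt => //.
    apply: (lt_le_trans (H2 L hL x xne hxL _)); first by exists c.
    exact: (V_le B (~: L) x c).
  pose d := restr L (fun i => c i + c' i).
  have hd : y = synth B d.
    rewrite synth_restr {1}hyx hc'.
    rewrite -big_split /=; apply: eq_bigr => i _; by rewrite mulmxDr.
  have := hopt d hd.
  apply/negP; rewrite -ltNge (l1_restr q1).
  rewrite /l1_obj (sum_split _ L).
  apply: (le_lt_trans (y := \sum_(i in L) lqnorm q (c i) + \sum_(i in L) lqnorm q (c' i))).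
    by rewrite -big_split /=; apply: ler_sum => i _; exact: (@lq_triangle R q q1).
  by rewrite ltrD2l.
Qed.
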